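(* Let $S=\left\{\begin{pmatrix}\alpha&a&b\\0&\alpha&c\\0&0&\alpha\end{pmatrix}:\alpha,a,b,c\in\mathbb C\right\}$, normed by the operator norm of $3\times 3$ matrices acting on $\mathbb C^3$ (Euclidean norm). Let $A$ be $S$ with the multiplication $(\alpha I+M)(\beta I+N)=\alpha\beta I+\alpha N+\beta M$ for strictly upper triangular $M,N$ (the unitization of the strictly upper triangular matrices with zero multiplication), and let $B$ be $S$ with the usual matrix multiplication. Then $A^{-1}=B^{-1}=\{\alpha\neq 0\}$ as sets, the map $T:A^{-1}\to B^{-1}$, $T(M)=M+F$ with $F=\begin{pmatrix}0&0&7\\0&0&0\\0&0&0\end{pmatrix}$, is a well-defined surjective isometry, $A$ is commutative but not semisimple, and $A^{-1}$ is not isomorphic as a group to $B^{-1}$.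
   Context: The metric on $A^{-1}$ and $B^{-1}$ is the one induced by the operator norm. *)

(* Defs.v *)
(* The scalar field is an arbitrary numClosedFieldType C
   (the complex numbers are an instance). *)
From HB Require Import structures.
From mathcomp Require Import all_boot all_order all_algebra.
Set Implicit Arguments. Unset Strict Implicit. Unset Printing Implicit Defensive.
Import Order.TTheory GRing.Theory Num.Theory.
Local Open Scope ring_scope.

Section Defs.
Variable C : numClosedFieldType.

Definition inS (M : 'M[C]_3) : bool :=
  [forall i : 'I_3, forall j : 'I_3, (j < i)%N ==> (M i j == 0)] &&
  [forall i : 'I_3, M i i == M ord0 ord0].

Definition scal (M : 'M[C]_3) : C := M ord0 ord0.
Definition strict (M : 'M[C]_3) : 'M[C]_3 := M - (scal M)%:M.

Definition mulA (X Y : 'M[C]_3) : 'M[C]_3 :=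
  (scal X * scal Y)%:M + scal X *: strict Y + scal Y *: strict X.

Definition unitA (X : 'M[C]_3) : Prop :=
  inS X /\ exists Y, inS Y /\ mulA X Y = 1%:M /\ mulA Y X = 1%:M.
Definition unitB (X : 'M[C]_3) : Prop :=
  inS X /\ exists Y, inS Y /\ X *m Y = 1%:M /\ Y *m X = 1%:M.

Definition vnorm (v : 'cV[C]_3) : C := sqrtC (\sum_i `|v i ord0| ^+ 2).

Definition is_opnorm (M : 'M[C]_3) (r : C) : Prop :=
  (forall v : 'cV[C]_3, vnorm (M *m v) <= r * vnorm v) /\
  (forall r' : C, (forall v : 'cV[C]_3, vnorm (M *m v) <= r' * vnorm v) -> r <= r').

Definition Fmx : 'M[C]_3 := 7 *: delta_mx ord0 ord_max.
Definition Tmap (M : 'M[C]_3) : 'M[C]_3 := M + Fmx.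

Definition radA (x : 'M[C]_3) : Prop :=
  inS x /\ forall y, inS y -> unitA (1%:M - mulA y x).

Definition semisimpleA : Prop := forall x, radA x -> x = 0.

Definition commutativeA : Prop :=
  forall X Y, inS X -> inS Y -> mulA X Y = mulA Y X.

Definition group_iso_AB (phi : 'M[C]_3 -> 'M[C]_3) : Prop :=
  (forall X, unitA X -> unitB (phi X)) /\
  (forall X Y, unitA X -> unitA Y -> phi X = phi Y -> X = Y) /\
  (forall Z, unitB Z -> exists X, unitA X /\ phi X = Z) /\
  (forall X Y, unitA X -> unitA Y -> phi (mulA X Y) = phi X *m phi Y).

End Defs.

(* Main.v *)
Require Import Defs.
From HB Require Import structures.
From mathcomp Require Import all_boot all_order all_algebra.
Import Order.TTheory GRing.Theory Num.Theory.
Local Open Scope ring_scope.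

Section H.
Variable C : numClosedFieldType.
Implicit Types X Y N M : 'M[C]_3.

Definition ups (p : nat) (N : 'M[C]_3) := forall i j : 'I_3, (j < i + p)%N -> N i j = 0.

Lemma ups_mul p q N M : ups p N -> ups q M -> ups (p + q) (N *m M).
Proof.
move=> hN hM i j hij; rewrite mxE; apply: big1 => k _.
case: (ltnP k (i + p)) => h; first by rewrite hN // mul0r.
rewrite hM ?mulr0 //; apply: (leq_trans hij); by rewrite addnA leq_add2r.
Qed.

Lemma ups3 N : ups 3 N -> N = 0.
Proof.
move=> h; apply/matrixP => i j; rewrite mxE h //.
exact: leq_trans (ltn_ord j) (leq_addl i 3).
Qed.

Lemma ups_add p N M : ups p N -> ups p M -> ups p (N + M).
Proof. by move=> hN hM i j h; rewrite mxE hN ?hM ?addr0. Qed.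

Lemma ups_scale p a N : ups p N -> ups p (a *: N).
Proof. by move=> hN i j h; rewrite mxE hN ?mulr0. Qed.

Lemma ups_opp p N : ups p N -> ups p (- N).
Proof. by move=> hN i j h; rewrite mxE hN ?oppr0. Qed.

Lemma inSP X : inS X <-> (forall i j : 'I_3, (j < i)%N -> X i j = 0) /\ (forall i, X i i = scal X).
Proof.
split.
  case/andP=> /forallP h1 /forallP h2; split.
    by move=> i j hij; move: (h1 i) => /forallP /(_ j) /implyP /(_ hij) /eqP.
  by move=> i; apply/eqP/h2.
case=> h1 h2; apply/andP; split; apply/forallP => i.
  by apply/forallP => j; apply/implyP => hij; rewrite h1.
by rewrite h2.
Qed.

Lemma strict_ups X : inS X -> ups 1 (strict X).
Proof.
case/inSP=> h1 h2 i j; rewrite addn1 ltnS leq_eqVlt => /orP [/eqP e|h].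
  have -> : j = i by apply: val_inj.
  by rewrite !mxE eqxx h2 mulr1n subrr.
rewrite !mxE h1 // (_ : (i == j) = false) ?mulr0n ?subrr //.
by apply/negbTE; rewrite -val_eqE /= gtn_eqF.
Qed.

Lemma inS_of a N : ups 1 N -> inS (a%:M + N) /\ scal (a%:M + N) = a.
Proof.
move=> hN.
have hs : scal (a%:M + N) = a.
  by rewrite /scal !mxE eqxx mulr1n hN ?addr0.
split=> //; apply/inSP; split.
  move=> i j hij; rewrite !mxE hN; last by apply: ltn_trans hij _; rewrite addn1.
  rewrite (_ : (i == j) = false) ?mulr0n ?addr0 //.
  by apply/negbTE; rewrite -val_eqE /= gtn_eqF.
by move=> i; rewrite hs !mxE eqxx mulr1n hN ?addr0 // addn1.
Qed.

Lemma decomp X : X = (scal X)%:M + strict X.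
Proof. by rewrite /strict addrC subrK. Qed.

Lemma strict_of a N : ups 1 N -> strict (a%:M + N) = N.
Proof. by move=> hN; rewrite /strict (inS_of a N hN).2 addrC addKr. Qed.

Lemma strict00 X : strict X ord0 ord0 = 0.
Proof. by rewrite !mxE eqxx mulr1n subrr. Qed.

Lemma inS_addU X N : inS X -> ups 1 N -> inS (X + N) /\ scal (X + N) = scal X.
Proof.
move=> hX hN; have -> : X + N = (scal X)%:M + (strict X + N) by rewrite addrA -decomp.
by apply: inS_of; apply: ups_add => //; apply: strict_ups.
Qed.

Lemma inv_alg a b N : a * b = 1 -> N *m N *m N = 0 ->
  let Y := b%:M + ((- (b * b)) *: N + (b * b * b) *: (N *m N)) in
  (a%:M + N) *m Y = 1%:M /\ Y *m (a%:M + N) = 1%:M.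
Proof.
move=> hab hN3 Y; rewrite /Y.
have e1 : a * - (b * b) + b = 0 by rewrite mulrN !mulrA hab mul1r addNr.
have e2 : a * (b * b * b) + - (b * b) = 0 by rewrite !mulrA hab mul1r addrN.
split.
  rewrite mulmxDl !mulmxDr !mul_scalar_mx !mul_mx_scalar -!scalemxAr mulmxA hN3 scaler0 addr0.
  rewrite !scalerA -scalemx1 scalerA hab scale1r -[RHS]addr0 -addrA; congr (_ + _).
  by rewrite addrACA -!scalerDl e1 e2 !scale0r addr0.
rewrite !mulmxDl !mulmxDr !mul_scalar_mx !mul_mx_scalar -!scalemxAl.
rewrite !scalerA -scalemx1 scalerA mulrC hab scale1r.
rewrite hN3 scaler0 !addr0 -[RHS]addr0 -addrA; congr (_ + _).
rewrite !addrA -scalerDl (addrC b) e1 scale0r add0r -scalerDl (addrC (- (b * b))) e2.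
by rewrite scale0r.
Qed.


Lemma ups_mono p q N : (q <= p)%N -> ups p N -> ups q N.
Proof. move=> hqp h i j hij; apply: h; apply: leq_trans hij _; by rewrite leq_add2l. Qed.

Lemma mulAC X Y : Defs.mulA X Y = Defs.mulA Y X.
Proof. by rewrite /Defs.mulA [scal X * _]mulrC addrAC. Qed.

Lemma unitA_iff X : unitA X <-> inS X /\ scal X != 0.
Proof.
split.
  case=> hX [Y [hY [h1 h2]]]; split=> //.
  move: (congr1 (fun M => M ord0 ord0) h1); rewrite /= /Defs.mulA !mxE eqxx !mulr1n.
  rewrite !subrr !mulr0 !addr0 => e; apply/eqP => h0; move: e.
  by rewrite h0 mul0r => /eqP; rewrite eq_sym oner_eq0.
case=> hX hs; set b := (scal X)^-1; set N := strict X.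
have hN : ups 1 N by apply: strict_ups.
have hM : ups 1 ((- (b * b)) *: N) by apply: ups_scale.
have [hY sY] := inS_of b _ hM.
have stY := strict_of b _ hM.
have hab : scal X * b = 1 by rewrite mulfV.
have e : Defs.mulA X (b%:M + (- (b * b)) *: N) = 1%:M.
  rewrite /Defs.mulA sY stY hab scalerA -/N -addrA -scalerDl.
  by rewrite mulrN mulrA hab mul1r addNr scale0r addr0.
split=> //; exists (b%:M + (- (b * b)) *: N); split=> //; split=> //.
by rewrite mulAC.
Qed.

Lemma unitB_iff X : unitB X <-> inS X /\ scal X != 0.
Proof.
split.
  case=> hX [Y [hY [h1 h2]]]; split=> //.
  move: (congr1 (fun M => M ord0 ord0) h1); rewrite /= !mxE eqxx mulr1n.
  rewrite (bigD1 ord0) //= big1 ?addr0; last first.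
    move=> k hk; case/inSP: hY => hY1 _; rewrite hY1 ?mulr0 //.
    by rewrite lt0n; apply: contra hk => /eqP hk0; apply/eqP/val_inj.
  move=> e; apply/eqP => h0; move: e.
  by rewrite /scal in h0; rewrite h0 mul0r => /eqP; rewrite eq_sym oner_eq0.
case=> hX hs; set b := (scal X)^-1; set N := strict X.
have hN : ups 1 N by apply: strict_ups.
have hN2 : ups 2 (N *m N) by exact: (@ups_mul 1 1 N N hN hN).
have hN3 : N *m N *m N = 0 by apply: ups3; exact: (@ups_mul 2 1 _ N hN2 hN).
have hM : ups 1 ((- (b * b)) *: N + (b * b * b) *: (N *m N)).
  apply: ups_add; apply: ups_scale => //; exact: (@ups_mono 2 1 _ isT hN2).
have hab : scal X * b = 1 by rewrite mulfV.
have [e1 e2] := inv_alg _ _ _ hab hN3.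
split=> //; eexists; split; first exact: (inS_of b _ hM).1.
by rewrite {1 2}(decomp X); split; [exact: e1 | exact: e2].
Qed.

Lemma ups_delta (i0 j0 : 'I_3) : (i0 < j0)%N -> ups 1 (delta_mx i0 j0).
Proof.
move=> h i j hij; rewrite mxE; case: eqP => [ei|] //=; case: eqP => [ej|] //=.
by subst; rewrite addn1 ltnS leqNgt h in hij.
Qed.
End H.

Arguments ups {C}.
Arguments ups_mul {C}.
Arguments ups3 {C}.
Arguments ups_add {C}.
Arguments ups_scale {C}.
Arguments ups_opp {C}.
Arguments inSP {C}.
Arguments strict_ups {C}.
Arguments inS_of {C}.
Arguments decomp {C}.
Arguments strict_of {C}.
Arguments strict00 {C}.
Arguments inS_addU {C}.
Arguments inv_alg {C}.
Arguments ups_mono {C}.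
Arguments mulAC {C}.
Arguments unitA_iff {C}.
Arguments unitB_iff {C}.
Arguments ups_delta {C}.

Theorem mainTheorem6 (C : numClosedFieldType) :
  (forall X : 'M[C]_3, (unitA X <-> inS X /\ scal X != 0) /\
                       (unitB X <-> inS X /\ scal X != 0)) /\
  (forall X : 'M[C]_3, unitA X -> unitB (Tmap X)) /\
  (forall Y : 'M[C]_3, unitB Y -> exists X, unitA X /\ Tmap X = Y) /\
  (forall X Y : 'M[C]_3, unitA X -> unitA Y ->
     forall r, is_opnorm (Tmap X - Tmap Y) r <-> is_opnorm (X - Y) r) /\
  commutativeA C /\
  ~ semisimpleA C /\
  ~ (exists phi : 'M[C]_3 -> 'M[C]_3, group_iso_AB phi).
Proof.
have hF : ups 1 (Fmx C) by apply: ups_scale; apply: ups_delta.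
pose o1 : 'I_3 := @Ordinal 3 1 isT.
pose o2 : 'I_3 := @Ordinal 3 2 isT.
split; first by move=> X; split; [apply: unitA_iff | apply: unitB_iff].
split.
  move=> X /unitA_iff [hX hs]; apply/unitB_iff.
  by have [h1 h2] := inS_addU _ _ hX hF; rewrite /Tmap h2.
split.
  move=> Y /unitB_iff [hY hs]; exists (Y - Fmx C); split; last by rewrite /Tmap subrK.
  by have [h1 h2] := inS_addU _ _ hY (ups_opp _ _ hF); apply/unitA_iff; rewrite h2.
split.
  by move=> X Y _ _ r; rewrite /Tmap opprD addrACA subrr addr0.
split; first by move=> X Y _ _; exact: mulAC.
have e0 : (0 : C)%:M = 0 :> 'M_3 by rewrite -scalemx1 scale0r.
split.
  pose E : 'M[C]_3 := delta_mx ord0 o1.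
  have hE : ups 1 E by apply: ups_delta.
  have sE : scal E = 0 by rewrite /scal mxE.
  have stE : strict E = E by rewrite /strict sE e0 subr0.
  move=> /(_ E) hss.
  have nE : E != 0.
    apply/negP => /eqP /matrixP /(_ ord0 o1); rewrite !mxE /=.
    by move/eqP; rewrite oner_eq0.
  apply: (negP nE); apply/eqP; apply: hss; split.
    by have := (inS_of 0 _ hE).1; rewrite e0 add0r.
  move=> y hy; apply/unitA_iff.
  have -> : 1%:M - Defs.mulA y E = 1%:M + (- scal y) *: E.
    by rewrite /Defs.mulA sE stE mulr0 e0 scale0r add0r addr0 scaleNr.
  have [h1 h2] := inS_of 1 _ (ups_scale _ (- scal y) _ hE).
  by rewrite h1 h2 oner_eq0.
case=> phi [h1 [h2 [h3 h4]]].
pose E1 : 'M[C]_3 := delta_mx ord0 o1; pose E2 : 'M[C]_3 := delta_mx o1 o2.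
have hZ1 : unitB (1%:M + E1) by apply/unitB_iff; have [a b] := inS_of 1 _ (ups_delta (C:=C) ord0 o1 isT); rewrite b oner_eq0.
have hZ2 : unitB (1%:M + E2) by apply/unitB_iff; have [a b] := inS_of 1 _ (ups_delta (C:=C) o1 o2 isT); rewrite b oner_eq0.
have [X1 [u1 p1]] := h3 _ hZ1.
have [X2 [u2 p2]] := h3 _ hZ2.
have := h4 _ _ u1 u2; rewrite mulAC h4 // p1 p2.
rewrite !mulmxDl !mulmxDr !mul1mx !mulmx1 /E1 /E2 mul_delta_mx mul_delta_mx_0 //.
move/matrixP => /(_ ord0 o2); rewrite !mxE /=.
by rewrite !add0r => /eqP; rewrite eq_sym oner_eq0.
Qed.
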